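(* Let $f:\mathbb{R}^n\to\mathbb{R}$ be twice continuously differentiable, $B\in\mathbb{R}^{p\times n}$, $\lambda_1,\lambda_2>0$, $l\in\mathbb{R}^n$ with $l\le 0$, $u\in\mathbb{R}^n$ with $u\ge 0$, $\Omega=\{x\in\mathbb{R}^n: l\le x\le u\}$, $g(x)=\lambda_1\|Bx\|_0+\lambda_2\|x\|_0+\delta_\Omega(x)$ and $F=f+g$. For $z\in\mathbb{R}^n$ let $$\Pi(z)=\{x\in\Omega:\ \mathrm{supp}(x)\subset\mathrm{supp}(z),\ \mathrm{supp}(Bx)\subset\mathrm{supp}(Bz)\}.$$ Fix any $z\in\Omega$. Then: (i) $\partial F(z)=\nabla f(z)+\partial g(z)=\nabla f(z)+\mathcal{N}_{\Pi(z)}(z)$; (ii) for any $x\in\mathbb{R}^n$, $0\in\nabla f(x)+\mathcal{N}_{\Pi(z)}(x)$ implies $0\in\partial F(x)$.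
   Context: $\|y\|_0$ is the number of nonzero entries of $y$ and $\mathrm{supp}(y)=\{i: y_i\neq 0\}$. $\delta_\Omega$ is the indicator function of $\Omega$ ($0$ on $\Omega$, $+\infty$ outside). $\partial$ denotes the basic (limiting) subdifferential. $\Pi(z)$ is a convex polyhedral set and $\mathcal{N}_{\Pi(z)}(x)$ is its normal cone at $x$ (empty if $x\notin\Pi(z)$). *)

(* Defs.v *)
From HB Require Import structures.
From mathcomp Require Import all_boot all_order all_algebra.
From mathcomp Require Import all_classical all_reals all_analysis.
Set Implicit Arguments. Unset Strict Implicit. Unset Printing Implicit Defensive.
Import Order.TTheory GRing.Theory Num.Theory.
Import numFieldNormedType.Exports.
Local Open Scope classical_set_scope.
Local Open Scope ring_scope.

Section Defs.
Variables (R : realType) (n : nat).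
Local Notation V := 'rV[R]_n.

Definition ebasis (i : 'I_n) : V := delta_mx 0 i.

Definition dotv (x y : V) : R := \sum_(i < n) x 0 i * y 0 i.

Definition partial (i : 'I_n) (f : V -> R) : V -> R := fun x => 'D_(ebasis i) f x.

Definition grad (f : V -> R) (x : V) : V := \row_i partial i f x.

Definition C2 (f : V -> R) : Prop :=
  [/\ forall i x, derivable f x (ebasis i),
      forall i, continuous (partial i f),
      forall i j x, derivable (partial i f) x (ebasis j)
    & forall i j, continuous (partial j (partial i f))].

Definition supp (m : nat) (y : 'rV[R]_m) : {set 'I_m} := [set i | y 0 i != 0].
Definition l0 (m : nat) (y : 'rV[R]_m) : nat := #|supp y|.

Definition box (l u : V) : set V := [set x | forall i, l 0 i <= x 0 i <= u 0 i].

Definition indic (A : set V) (x : V) : \bar R :=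
  if `[< A x >] then 0%E else +oo%E.

Definition ncone (C : set V) (x : V) : set V :=
  [set v | C x /\ forall y, C y -> dotv v (y - x) <= 0].

(* regular (Frechet) subdifferential of an extended-real-valued function:
   v such that h x is finite and
   liminf_{y -> x, y <> x} (h y - h x - <v, y - x>) / |y - x| >= 0,
   written out with epsilons. *)
Definition fsubdiff (h : V -> \bar R) (x : V) : set V :=
  [set v | h x \is a fin_num /\
     forall eps : R, 0 < eps ->
       \forall y \near x, (h x + (dotv v (y - x) - eps * `|y - x|)%:E <= h y)%E].

Definition lsubdiff (h : V -> \bar R) (x : V) : set V :=
  [set v | h x \is a fin_num /\
     exists (xs vs : nat -> V),
       [/\ xs @ \oo --> x,
           (fun k => h (xs k)) @ \oo --> h x,
           (forall k, fsubdiff h (xs k) (vs k))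
         & vs @ \oo --> v]].

End Defs.

Section Problem.
Variables (R : realType) (n p : nat).
Local Notation V := 'rV[R]_n.

(* g(x) = lam1 ||Bx||_0 + lam2 ||x||_0 + delta_Omega(x), with Bx := x *m B^T *)
Definition gfun (B : 'M[R]_(p, n)) (lam1 lam2 : R) (l u : V) (x : V) : \bar R :=
  ((lam1 * (l0 (x *m B^T))%:R + lam2 * (l0 x)%:R)%:E + indic (box l u) x)%E.

Definition Ffun (f : V -> R) (B : 'M[R]_(p, n)) (lam1 lam2 : R) (l u : V) (x : V)
  : \bar R := ((f x)%:E + gfun B lam1 lam2 l u x)%E.

Definition Pi (B : 'M[R]_(p, n)) (l u : V) (z : V) : set V :=
  [set x | box l u x /\ supp x \subset supp z /\
           supp (x *m B^T) \subset supp (z *m B^T)].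
End Problem.

(* Main.v *)
Require Import Defs.
From HB Require Import structures.
From mathcomp Require Import all_boot all_order all_algebra.
From mathcomp Require Import all_classical all_reals all_analysis.
From mathcomp Require Import ring lra.
From mathcomp Require Import unstable.
Import Order.TTheory GRing.Theory Num.Theory.
Import numFieldNormedType.Exports.
Local Open Scope classical_set_scope.
Local Open Scope ring_scope.

Section A.
Variables (R : realType) (n : nat).
Local Notation V := 'rV[R]_n.

Lemma line_quot (f : V -> R) (p e : V) (t : R) :
  (fun h : R => h^-1 *: (((fun s : R => f (p + s *: e)) \o shift t) (h *: 1) - f (p + t *: e)))
  = (fun h => h^-1 *: ((f \o shift (p + t *: e)) (h *: e) - f (p + t *: e))).
Proof.
apply/funext => h /=; congr (_ *: (f _ - _)).
have -> : h *: (1:R) = h by rewrite /GRing.scale /= mulr1.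
by rewrite scalerDl addrCA addrC.
Qed.

Lemma line_derivable (f : V -> R) (p e : V) (t : R) :
  derivable (fun s : R => f (p + s *: e)) t 1 = derivable f (p + t *: e) e.
Proof. by rewrite /derivable line_quot. Qed.

Lemma line_derive (f : V -> R) (p e : V) (t : R) :
  derive (fun s : R => f (p + s *: e)) t 1 = derive f (p + t *: e) e.
Proof. by rewrite /derive line_quot. Qed.

Lemma entry_le (x : V) i : `|x 0 i| <= `|x|.
Proof.
rewrite [leRHS]/Num.norm /= mx_normrE; apply/bigmax_geP; right => /=.
by exists (0, i).
Qed.

Lemma entry_le2 (x y : V) i : `|x 0 i - y 0 i| <= `|x - y|.
Proof. by have := entry_le (x - y) i; rewrite !mxE. Qed.

Lemma norm_le_entries (x : V) c : 0 <= c -> (forall i, `|x 0 i| <= c) -> `|x| <= c.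
Proof.
move=> c0 H; rewrite [leLHS]/Num.norm /= mx_normrE; apply/bigmax_leP; split => // -[a b] _ /=.
by rewrite (ord1 a); apply: H.
Qed.

Lemma seg_bound (phi dphi : R -> R) (d c0 c : R) :
  (forall s : R, is_derive s (1:R) phi (dphi s)) ->
  (forall s, `|s| <= `|d| -> `|dphi s - c0| <= c) ->
  `|phi d - phi 0 - c0 * d| <= c * `|d|.
Proof.
move=> hd hb.
have cont : forall a b : R, {within `[a, b], continuous phi}.
  by move=> a b; apply: derivable_within_continuous => s _; exact: ex_derive.
have [d0|d0] := leP 0 d.
  have [xi xiI E] := MVT_segment d0 (fun s _ => hd s) (cont 0 d).
  rewrite E subr0 -mulrBl normrM ler_wpM2r //.
  apply: hb; move: xiI; rewrite in_itv /= => /andP[a b].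
  by rewrite !ger0_norm //; apply: le_trans b.
have [xi xiI E] := MVT_segment (ltW d0) (fun s _ => hd s) (cont d 0).
have -> : phi d - phi 0 - c0 * d = (dphi xi - c0) * d.
  have E2 : phi d - phi 0 = dphi xi * d by rewrite -opprB E sub0r mulrN opprK.
  by rewrite E2 mulrBl.
rewrite normrM ler_wpM2r //.
apply: hb; move: xiI; rewrite in_itv /= => /andP[a b].
rewrite (ltr0_norm d0) ler_norml; apply/andP; split; first by rewrite opprK.
by apply: le_trans b _; rewrite lerNr oppr0 ltW.
Qed.

Definition pp (x y : V) (k : nat) : V := \row_j (if (j < k)%N then y 0 j else x 0 j).

Lemma pp_succ x y (k : 'I_n) : pp x y k.+1 = pp x y k + (y 0 k - x 0 k) *: ebasis R k.
Proof.
apply/rowP => j; rewrite /ebasis !mxE ltnS leq_eqVlt.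
case: (eqVneq j k) => [->|jk] /=; first by rewrite ltnn eqxx mulr1 addrC subrK.
move: (jk); rewrite -val_eqE => /negbTE -> /=; by rewrite mulr0 addr0.
Qed.

Lemma pp0 x y : pp x y 0 = x.
Proof. by apply/rowP => j; rewrite !mxE. Qed.

Lemma ppn x y : pp x y n = y.
Proof. by apply/rowP => j; rewrite !mxE ltn_ord. Qed.

Lemma seg_close (x y : V) (k : 'I_n) (s : R) : `|s| <= `|y 0 k - x 0 k| ->
  `|x - (pp x y k + s *: ebasis R k)| <= `|x - y|.
Proof.
move=> hs; apply: norm_le_entries => // j; rewrite /ebasis !mxE.
case: (ltnP j k) => jk.
  have -> : (j == k) = false by rewrite -val_eqE ltn_eqF.
  rewrite /= mulr0 addr0; exact: entry_le2.
case: (eqVneq j k) => [->|jk'] /=.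
  rewrite mulr1 opprD addrA subrr sub0r normrN.
  by apply: le_trans hs _; rewrite distrC entry_le2.
by rewrite mulr0 addr0 subrr normr0.
Qed.

Lemma frechet (f : V -> R) : C2 f -> forall (x : V) (eps : R), 0 < eps ->
  \forall y \near x, `|f y - f x - dotv (grad f x) (y - x)| <= eps * `|y - x|.
Proof.
move=> [dv cp _ _] x eps eps0.
pose c := eps / n.+1%:R.
have c0 : 0 < c by rewrite divr_gt0.
have : \forall q \near x, forall i, `|partial i f x - partial i f q| < c.
  apply: (@filter_forall _ _ (fun i q => `|partial i f x - partial i f q| < c) _ (nbhs_filter x)) => i.
  exact: (cvgr_dist_lt _ _ (cp i x) _ c0).
move=> /nbhs_ballP[del del0 Hdel].
have Hq : forall q, `|x - q| < del -> forall i, `|partial i f q - partial i f x| <= c.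
  move=> q qx i; rewrite distrC ltW //; apply: Hdel; by rewrite -ball_normE.
have := near_ball x del del0; apply: filterS => y.
rewrite -ball_normE /ball_ => xy.
have key : forall k : 'I_n, `|f (pp x y k.+1) - f (pp x y k) - partial k f x * (y - x) 0 k|
    <= c * `|y - x|.
  move=> k; rewrite pp_succ !mxE.
  have := @seg_bound (fun s => f (pp x y k + s *: ebasis R k))
     (fun s => partial k f (pp x y k + s *: ebasis R k)) (y 0 k - x 0 k) (partial k f x) c.
  rewrite scale0r addr0 => H.
  apply: le_trans (H _ _) _.
  - move=> s; split; first by rewrite line_derivable; exact: dv.
    by rewrite line_derive.
  - move=> s hs; apply: Hq; apply: le_lt_trans xy; exact: seg_close.
  - by rewrite ler_pM2l // entry_le2.
have tel : f y - f x = \sum_(k < n) (f (pp x y k.+1) - f (pp x y k)).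
  by rewrite -(big_mkord xpredT (fun k => f (pp x y k.+1) - f (pp x y k)))
     telescope_sumr // ppn pp0.
rewrite tel /dotv -sumrB.
rewrite (eq_bigr (fun k : 'I_n => f (pp x y k.+1) - f (pp x y k) - partial k f x * (y - x) 0 k));
  last by move=> k _; rewrite [grad f x 0 k]mxE.
apply: le_trans (ler_norm_sum _ _ _) _.
apply: le_trans (ler_sum _ (fun k _ => key k)) _.
rewrite sumr_const card_ord -mulrnAl ler_wpM2r // /c -mulr_natr -mulrA ler_piMr ?ltW //.
by rewrite mulrC ltr_pdivrMr ?ltr0n // mul1r ltr_nat.
Qed.
End A.
Section B.
Variables (R : realType) (n p : nat) (B : 'M[R]_(p, n)) (lam1 lam2 : R) (l u : 'rV[R]_n).
Hypotheses (lam1_gt0 : 0 < lam1) (lam2_gt0 : 0 < lam2).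
Local Notation V := 'rV[R]_n.
Local Notation box := (box l u).
Local Notation g := (gfun B lam1 lam2 l u).
Local Notation PI := (Pi B l u).

Definition aa (x : V) : R := lam1 * (l0 (x *m B^T))%:R + lam2 * (l0 x)%:R.

Lemma gfunE x : g x = if `[< box x >] then (aa x)%:E else +oo%E.
Proof. by rewrite /gfun /Defs.indic; case: ifP => _; [rewrite adde0 | rewrite addey]. Qed.

Lemma FfunE f x : Ffun f B lam1 lam2 l u x = if `[< box x >] then (f x + aa x)%:E else +oo%E.
Proof. by rewrite /Ffun gfunE; case: ifP => _; [rewrite EFinD | rewrite addey]. Qed.

Lemma fsub_real (H : V -> R) x v :
  fsubdiff (fun y => if `[< box y >] then (H y)%:E else +oo%E) x v <->
  box x /\ forall eps, 0 < eps -> \forall y \near x,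
     box y -> H x + (dotv v (y - x) - eps * `|y - x|) <= H y.
Proof.
rewrite /fsubdiff /=; split.
  case=> fin Hn; have bx : box x by move: fin; case: asboolP.
  split=> // eps e0; have := Hn eps e0; apply: filterS => y.
  by rewrite (asboolT bx); case: asboolP => // _; rewrite lee_fin.
case=> bx Hn; rewrite (asboolT bx); split => // eps e0.
have := Hn _ e0; apply: filterS => y Hy; case: asboolP => [yb|_].
  by rewrite lee_fin; exact: Hy.
exact: leey.
Qed.

Lemma cvg_sumI {T} (F : set_system T) {FF : Filter F} m (w : 'I_m -> T -> R) (lim : 'I_m -> R) :
  (forall i, w i @ F --> lim i) ->
  (fun k => \sum_(i < m) w i k) @ F --> \sum_(i < m) lim i.
Proof.
elim: m w lim => [|m IH] w lim H.
  rewrite big_ord0; under eq_fun do rewrite big_ord0; exact: cvg_cst.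
rewrite big_ord_recr /=; under eq_fun do rewrite big_ord_recr /=.
apply: (cvgD (IH (fun i => w (widen_ord (leqnSn m) i)) (fun i => lim (widen_ord (leqnSn m) i)) _) (H _)).
by move=> i; exact: H.
Qed.

Lemma near_supp_gen m (h : V -> 'rV[R]_m) (x : V) :
  (forall j, (fun y => h y 0 j) @ x --> h x 0 j) ->
  \forall y \near x, supp (h x) \subset supp (h y).
Proof.
move=> hc.
have : \forall y \near x, forall j, h x 0 j != 0 -> h y 0 j != 0.
  apply: (@filter_forall _ _ (fun j y => h x 0 j != 0 -> h y 0 j != 0) _ (nbhs_filter x)) => j.
  have [hx0|hx0] := eqVneq (h x 0 j) 0; first by apply: nearW.
  have hpos : 0 < `|h x 0 j| by rewrite normr_gt0.
  have := cvgr_dist_lt _ _ (hc j) _ hpos.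
  move=> /(_ (nbhs_filter x)) H1; apply: filterS H1 => y hy _; apply/eqP => hy0; move: hy; rewrite hy0 subr0 ltxx.
  by [].
apply: filterS => y Hy; apply/fintype.subsetP => j; rewrite !inE; exact: Hy.
Qed.

Lemma cvg_coord (x : V) j : (fun y : V => y 0 j) @ x --> x 0 j.
Proof. exact: (@coord_continuous R 1 n 0 j x). Qed.

Lemma cvg_coordB (x : V) j : (fun y : V => (y *m B^T) 0 j) @ x --> (x *m B^T) 0 j.
Proof.
have -> : (fun y : V => (y *m B^T) 0 j) = (fun y => \sum_i (fun i y => y 0 i * B^T i j) i y).
  by apply/funext => y; rewrite mxE.
rewrite [(x *m _) 0 j]mxE.
apply: (@cvg_sumI _ (nbhs x) _ n (fun i y => y 0 i * B^T i j)) => i.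
apply: cvgMr_tmp; exact: cvg_coord.
Qed.

Lemma near_supp (x : V) : \forall y \near x,
  supp x \subset supp y /\ supp (x *m B^T) \subset supp (y *m B^T).
Proof.
have h1 := @near_supp_gen n id x (cvg_coord x).
have h2 := @near_supp_gen p (fun y => y *m B^T) x (cvg_coordB x).
by apply: filterS2 h1 h2 => y.
Qed.


Lemma supp_comb m (a b c : 'rV[R]_m) (t : R) :
  supp a \subset supp c -> supp b \subset supp c -> supp (a + t *: (b - a)) \subset supp c.
Proof.
move=> /fintype.subsetP ha /fintype.subsetP hb; apply/fintype.subsetP => i.
rewrite !inE !mxE => H; apply/eqP => c0; move/eqP: H; apply.
have a0 : a 0 i = 0.
  by apply/eqP; apply/negPn/negP => an0; have := ha i; rewrite !inE c0 eqxx an0 => /(_ isT).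
have b0 : b 0 i = 0.
  by apply/eqP; apply/negPn/negP => an0; have := hb i; rewrite !inE c0 eqxx an0 => /(_ isT).
by rewrite a0 b0 subrr mulr0 addr0.
Qed.

Lemma Pi_convex (z x y : V) (t : R) : PI z x -> PI z y -> 0 <= t <= 1 ->
  PI z (x + t *: (y - x)).
Proof.
move=> [bx [sx sBx]] [by_ [sy sBy]] /andP[t0 t1]; split; last split.
- move=> i; have /andP[lx ux] := bx i; have /andP[ly uy] := by_ i.
  rewrite !mxE.
  have h1 : 0 <= (1 - t) * (x 0 i - l 0 i) by apply: mulr_ge0; lra.
  have h2 : 0 <= t * (y 0 i - l 0 i) by apply: mulr_ge0; lra.
  have h3 : 0 <= (1 - t) * (u 0 i - x 0 i) by apply: mulr_ge0; lra.
  have h4 : 0 <= t * (u 0 i - y 0 i) by apply: mulr_ge0; lra.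
  apply/andP; split; nra.
- exact: supp_comb.
- rewrite mulmxDl -scalemxAl mulmxBl; exact: supp_comb.
Qed.

Lemma l0_le m (a b : 'rV[R]_m) : supp a \subset supp b -> (l0 a <= l0 b)%N.
Proof. exact: subset_leq_card. Qed.

Lemma aa_le (x y : V) : supp x \subset supp y -> supp (x *m B^T) \subset supp (y *m B^T) ->
  aa x <= aa y.
Proof.
move=> s1 s2; rewrite /aa; apply: lerD; (apply: ler_wpM2l; [exact: ltW | rewrite ler_nat; exact: l0_le]) => //.
Qed.

Definition mm := Num.min lam1 lam2.
Lemma mm_gt0 : 0 < mm. Proof. by rewrite lt_min lam1_gt0 lam2_gt0. Qed.

Lemma aa_jump (x y : V) : supp x \subset supp y -> supp (x *m B^T) \subset supp (y *m B^T) ->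
  (supp y = supp x /\ supp (y *m B^T) = supp (x *m B^T)) \/ aa x + mm <= aa y.
Proof.
move=> s1 s2.
have [e1|n1] := eqVneq (supp y) (supp x); have [e2|n2] := eqVneq (supp (y *m B^T)) (supp (x *m B^T)).
- by left.
- right; have : supp (x *m B^T) \proper supp (y *m B^T) by rewrite finset.properEneq eq_sym n2 s2.
  move=> /fintype.proper_card hc; rewrite /aa /l0 e1.
  have : (#|supp (x *m B^T)|.+1 <= #|supp (y *m B^T)|)%N by [].
  rewrite -(ler_nat R) -natr1 => hc'.
  have : lam1 * (#|supp (x *m B^T)|%:R + 1) <= lam1 * #|supp (y *m B^T)|%:R by rewrite ler_pM2l.
  have : mm <= lam1 by rewrite ge_min lexx.
  lra.
- right; have : supp x \proper supp y by rewrite finset.properEneq eq_sym n1 s1.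
  move=> /fintype.proper_card hc; rewrite /aa /l0 e2.
  have : (#|supp x|.+1 <= #|supp y|)%N by [].
  rewrite -(ler_nat R) -natr1 => hc'.
  have : lam2 * (#|supp x|%:R + 1) <= lam2 * #|supp y|%:R by rewrite ler_pM2l.
  have : mm <= lam2 by rewrite ge_min lexx orbT.
  lra.
- right; have : supp x \proper supp y by rewrite finset.properEneq eq_sym n1 s1.
  move=> /fintype.proper_card hc.
  have : supp (x *m B^T) \proper supp (y *m B^T) by rewrite finset.properEneq eq_sym n2 s2.
  move=> /fintype.proper_card hc2; rewrite /aa /l0.
  have : (#|supp x|.+1 <= #|supp y|)%N by [].
  rewrite -(ler_nat R) -natr1 => hc'.
  have : lam2 * (#|supp x|%:R + 1) <= lam2 * #|supp y|%:R by rewrite ler_pM2l.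
  have : (#|supp (x *m B^T)| <= #|supp (y *m B^T)|)%N by apply: ltnW.
  rewrite -(ler_nat R) => hc''.
  have : lam1 * #|supp (x *m B^T)|%:R <= lam1 * #|supp (y *m B^T)|%:R by rewrite ler_pM2l.
  have : mm <= lam2 by rewrite ge_min lexx orbT.
  lra.
Qed.

Lemma dotvZr (v d : V) (t : R) : dotv v (t *: d) = t * dotv v d.
Proof.
rewrite /dotv mulr_sumr; apply: eq_bigr => i _; rewrite mxE; ring.
Qed.

Lemma dotvBl (a b d : V) : dotv (a - b) d = dotv a d - dotv b d.
Proof.
rewrite /dotv -sumrB; apply: eq_bigr => i _; rewrite !mxE; ring.
Qed.

Lemma dot_bound (v d : V) : `|dotv v d| <= (\sum_i `|v 0 i|) * `|d|.
Proof.
rewrite /dotv mulr_suml; apply: le_trans (ler_norm_sum _ _ _) _.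
apply: ler_sum => i _; rewrite normrM ler_wpM2l //; exact: entry_le.
Qed.

Lemma fsub_g_iff (x v : V) : fsubdiff g x v <-> box x /\ ncone (PI x) x v.
Proof.
have -> : g = (fun y => if `[< box y >] then (aa y)%:E else +oo%E).
  by apply/funext => y; rewrite gfunE.
rewrite fsub_real; split.
- case=> bx Hn; split => //; split; first by split => //; split; exact: subxx.
  move=> y Py; set d := y - x; set N := `|d|.
  apply/ler_gtP => e e0.
  pose eps := e / (N + 1).
  have N0 : 0 <= N by exact: normr_ge0.
  have eps0 : 0 < eps by rewrite divr_gt0 // ltr_wpDl.
  have [del del0 Hd] := (iffLR (nbhs_ballP _ _) (Hn eps eps0)).
  pose t := Num.min 1 (del / (2 * (N + 1))).
  have t0 : 0 < t by rewrite lt_min ltr01 /= divr_gt0 // mulr_gt0 // ltr_wpDl.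
  have t1 : t <= 1 by rewrite ge_min lexx.
  have t2 : t * (2 * (N + 1)) <= del.
    by rewrite -ler_pdivlMr ?mulr_gt0 ?ltr_wpDl // ge_min lexx orbT.
  pose w := x + t *: d.
  have Pw : PI x w.
    by apply: Pi_convex => //; rewrite t1 ltW.
  have wx : w - x = t *: d by rewrite /w addrC addKr.
  have bw : ball x del w.
    rewrite -ball_normE /ball_ /= -opprB wx normrN normrZ gtr0_norm //.
    have : 0 <= t * N by rewrite mulr_ge0 // ltW.
    rewrite -/N; nra.
  have := Hd _ bw (proj1 Pw).
  rewrite wx dotvZr normrZ gtr0_norm //.
  have : aa w <= aa x by case: Pw => _ [s1 s2]; exact: aa_le.
  move=> hw hi; rewrite -/N in hi.
  have hD : t * (dotv v d - eps * N) <= 0 by lra.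
  have hD' : dotv v d - eps * N <= 0.
    by move: hD; rewrite pmulr_rle0.
  have : eps * N <= e.
    rewrite /eps mulrAC ler_pdivrMr ?ltr_wpDl //.
    have : 0 <= e * N by rewrite mulr_ge0 // ltW.
    nra.
  lra.
- case=> bx [Px Hc]; split => // eps e0.
  pose S := \sum_i `|v 0 i|.
  have S0 : 0 <= S by apply: sumr_ge0 => i _.
  have r0 : 0 < mm / (S + 1) by rewrite divr_gt0 ?mm_gt0 // ltr_wpDl.
  apply: filterS2 (near_supp x) (near_ball x _ r0) => y [s1 s2] yb by_.
  move: yb; rewrite -ball_normE /ball_ /= => yb.
  have hdot : dotv v (y - x) < mm.
    apply: le_lt_trans (ler_norm _) _; apply: le_lt_trans (dot_bound _ _) _.
    rewrite distrC in yb.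
    have : `|y - x| * (S + 1) < mm by rewrite -ltr_pdivlMr // ltr_wpDl.
    have : 0 <= `|y - x| by [].
    rewrite -/S; nra.
  have en : 0 <= eps * `|y - x| by rewrite mulr_ge0 // ltW.
  case: (aa_jump _ _ s1 s2) => [[e1 e2]|hj].
    have Py : PI x y by split => //; rewrite e1 e2; split; exact: subxx.
    have := Hc _ Py.
    have -> : aa y = aa x by rewrite /aa /l0 e1 e2.
    lra.
  lra.
Qed.

Lemma gfunE' : g = (fun y => if `[< box y >] then (aa y)%:E else +oo%E).
Proof. by apply/funext => y; rewrite gfunE. Qed.

Lemma FfunE' f : Ffun f B lam1 lam2 l u = (fun y => if `[< box y >] then (f y + aa y)%:E else +oo%E).
Proof. by apply/funext => y; rewrite FfunE. Qed.

Lemma fsub_F_iff (f : V -> R) (hf : C2 f) (x v : V) :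
  fsubdiff (Ffun f B lam1 lam2 l u) x v <-> fsubdiff g x (v - grad f x).
Proof.
rewrite FfunE' gfunE' !fsub_real; split; case=> bx H; split => // eps e0.
- have e2 : 0 < eps / 2 by rewrite divr_gt0.
  apply: filterS2 (H _ e2) (@frechet R n f hf x _ e2) => y hy hfy by_.
  move: (hy by_) hfy; rewrite dotvBl ler_norml => h1 /andP[h2 h3].
  lra.
- have e2 : 0 < eps / 2 by rewrite divr_gt0.
  apply: filterS2 (H _ e2) (@frechet R n f hf x _ e2) => y hy hfy by_.
  move: (hy by_) hfy; rewrite dotvBl ler_norml => h1 /andP[h2 h3].
  lra.
Qed.

Lemma C2_cont (f : V -> R) (hf : C2 f) (x : V) : f @ x --> f x.
Proof.
apply/(cvgrPdist_lt (FF := nbhs_filter x)) => e e0.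
pose S := \sum_i `|grad f x 0 i|.
have S0 : 0 <= S by apply: sumr_ge0 => i _.
have r0 : 0 < e / (S + 2) by rewrite divr_gt0 // ltr_wpDl.
apply: filterS2 (@frechet R n f hf x 1 ltr01) (near_ball x _ r0) => y h1 yb.
move: yb; rewrite -ball_normE /ball_ /= distrC => yb.
have hd := dot_bound (grad f x) (y - x); rewrite -/S in hd.
have : `|y - x| * (S + 2) < e by rewrite -ltr_pdivlMr // ltr_wpDl.
have : 0 <= `|y - x| by [].
move: h1 hd; rewrite mul1r !ler_norml ltr_norml => /andP[a1 a2] /andP[b1 b2] N0 hN.
apply/andP; split; nra.
Qed.

Lemma cvg_entry (vs : nat -> V) (v : V) : vs @ \oo --> v ->
  forall i, (fun k => vs k 0 i) @ \oo --> v 0 i.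
Proof.
move=> hv i; exact: (@continuous_cvg _ _ _ _ _ vs (fun M : V => M 0 i) v (@coord_continuous R 1 n 0 i v) hv).
Qed.

Lemma ncone_limit (z : V) (xs ws : nat -> V) (w : V) :
  box z -> xs @ \oo --> z -> (fun k => aa (xs k)) @ \oo --> aa z ->
  (forall k, ncone (PI (xs k)) (xs k) (ws k)) ->
  (forall i, (fun k => ws k 0 i) @ \oo --> w 0 i) ->
  ncone (PI z) z w.
Proof.
move=> bz hx ha hk hw.
have ev : \forall k \near \oo, PI (xs k) = PI z.
  have h1 : \forall k \near \oo, supp z \subset supp (xs k) /\
      supp (z *m B^T) \subset supp (xs k *m B^T) := hx _ (near_supp z).
  have h2 : \forall k \near \oo, `|aa z - aa (xs k)| < mm := cvgr_dist_lt (FF := eventually_filter) _ _ ha _ mm_gt0.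
  apply: filterS2 h1 h2 => k [s1 s2] hd.
  case: (aa_jump _ _ s1 s2) => [[e1 e2]|hj]; first by rewrite /Pi e1 e2.
  by move: hd; rewrite ltr_norml => /andP[h3 h4]; exfalso; lra.
split; first by split => //; split; exact: subxx.
move=> y Py.
have hyx : (fun k => y - xs k) @ \oo --> y - z.
  by apply: cvgB => //; exact: cvg_cst.
have hu : (fun k => dotv (ws k) (y - xs k)) @ \oo --> dotv w (y - z).
  rewrite /dotv; apply: (@cvg_sumI _ _ _ n (fun i k => ws k 0 i * (y - xs k) 0 i)) => i.
  have := cvgM (FF := eventually_filter) (hw i) (cvg_entry _ _ hyx i); apply.
apply: (closed_cvg (FF:=eventually_filter) (u_ := fun k => dotv (ws k) (y - xs k)) [set r : R | r <= 0] (@closed_le R 0) _ _ hu).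
apply: filterS ev => k e.
by have [_ Hn] := hk k; rewrite e in Hn; exact: Hn y Py.
Qed.

Lemma aa_cvg_of (xs : nat -> V) (z : V) (h : V -> R) :
  (forall k, box (xs k)) -> box z ->
  (fun k => if `[< box (xs k) >] then (h (xs k))%:E else +oo%E) @ \oo -->
     (if `[< box z >] then (h z)%:E else +oo%E) ->
  (fun k => h (xs k)) @ \oo --> h z.
Proof.
move=> bk bz; rewrite (asboolT bz).
have -> : (fun k => if `[< box (xs k) >] then (h (xs k))%:E else +oo%E) =
          (fun k => (h (xs k))%:E) by apply/funext => k; rewrite (asboolT (bk k)).
by move/fine_cvgP => [_ H].
Qed.

Lemma lsub_g_iff (z v : V) : lsubdiff g z v <-> box z /\ ncone (PI z) z v.
Proof.
split.
- case=> fin [xs [vs [hx hg hf hv]]].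
  have bz : box z by move: fin; rewrite gfunE; case: asboolP.
  have hk k : box (xs k) /\ ncone (PI (xs k)) (xs k) (vs k) by apply/fsub_g_iff.
  split => //; apply: (ncone_limit _ _ _ _ bz hx _ (fun k => (hk k).2) (cvg_entry _ _ hv)).
  apply: (aa_cvg_of _ _ _ (fun k => (hk k).1) bz).
  by move: hg; rewrite gfunE'.
- move=> [bz hc]; split; first by rewrite gfunE (asboolT bz).
  exists (fun=> z), (fun=> v); split; try exact: cvg_cst.
  by move=> k; apply/fsub_g_iff.
Qed.

Lemma lsub_F_iff (f : V -> R) (hf : C2 f) (z v : V) :
  lsubdiff (Ffun f B lam1 lam2 l u) z v <-> box z /\ ncone (PI z) z (v - grad f z).
Proof.
split.
- case=> fin [xs [vs [hx hg hfs hv]]].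
  have bz : box z by move: fin; rewrite FfunE; case: asboolP.
  have hk k : box (xs k) /\ ncone (PI (xs k)) (xs k) (vs k - grad f (xs k)).
    by apply/fsub_g_iff/fsub_F_iff.
  split => //.
  apply: (ncone_limit _ _ _ _ bz hx _ (fun k => (hk k).2)).
    have H1 : (fun k => f (xs k) + aa (xs k)) @ \oo --> f z + aa z.
      apply: (aa_cvg_of xs z (fun y => f y + aa y) (fun k => (hk k).1) bz).
      by move: hg; rewrite FfunE'.
    have H2 : (fun k => f (xs k)) @ \oo --> f z.
      exact: (@continuous_cvg _ _ _ _ _ xs f z (C2_cont f hf z) hx).
    have := cvgB (FF := eventually_filter) H1 H2.
    have -> : f z + aa z - f z = aa z by rewrite addrC addKr.
    have -> : ((fun k => f (xs k) + aa (xs k)) - (fun k => f (xs k))) = (fun k => aa (xs k)).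
      by apply/funext => k /=; rewrite addrC addKr.
    by [].
  move=> i.
  have -> : (fun k => (vs k - grad f (xs k)) 0 i) = (fun k => vs k 0 i - partial i f (xs k)).
    by apply/funext => k; rewrite !mxE.
  rewrite !mxE.
  apply: (cvgB (FF := eventually_filter) (cvg_entry _ _ hv i)).
  have [_ cp _ _] := hf.
  exact: (@continuous_cvg _ _ _ _ _ xs (partial i f) z (cp i z) hx).
- move=> [bz hc]; split; first by rewrite FfunE (asboolT bz).
  exists (fun=> z), (fun=> v); split; try exact: cvg_cst.
  by move=> k; apply/fsub_F_iff/fsub_g_iff.
Qed.

Lemma mainB (f : V -> R) (hf : C2 f) (z : V) (bz : box z) :
  [/\ lsubdiff (Ffun f B lam1 lam2 l u) z = (fun w => grad f z + w) @` lsubdiff g z,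
      (fun w => grad f z + w) @` lsubdiff g z = (fun w => grad f z + w) @` ncone (PI z) z
    & forall x : V, ((fun w => grad f x + w) @` ncone (PI z) x) 0 ->
        lsubdiff (Ffun f B lam1 lam2 l u) x 0].
Proof.
have Eg : lsubdiff g z = ncone (PI z) z.
  by rewrite predeqE => v; rewrite lsub_g_iff; split; [case | split].
split.
- rewrite Eg predeqE => v; rewrite lsub_F_iff //; split.
  + by case=> _ hc; exists (v - grad f z) => //; rewrite addrC subrK.
  + by case=> w hw <-; split => //; rewrite [grad f z + w]addrC addrK.
- by rewrite Eg.
- move=> x [w [[bx [sx sBx]] hw] e].
  apply/lsub_F_iff => //; split => //.
  have -> : 0 - grad f x = w.
    by apply/eqP; rewrite sub0r eq_sym -addr_eq0 addrC e.
  split; first by split => //; split; exact: subxx.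
  move=> y [b_y [sy sBy]]; apply: hw; split => //; split; [exact: (fintype.subset_trans sy sx) | exact: (fintype.subset_trans sBy sBx)].
Qed.
End B.

Theorem lemma2p4 (R : realType) (n p : nat) (f : 'rV[R]_n -> R)
  (B : 'M[R]_(p, n)) (lam1 lam2 : R) (l u : 'rV[R]_n) :
  C2 f -> 0 < lam1 -> 0 < lam2 ->
  (forall i, l 0 i <= 0) -> (forall i, 0 <= u 0 i) ->
  forall z : 'rV[R]_n, box l u z ->
  [/\ lsubdiff (Ffun f B lam1 lam2 l u) z
        = (fun w => grad f z + w) @` lsubdiff (gfun B lam1 lam2 l u) z,
      (fun w => grad f z + w) @` lsubdiff (gfun B lam1 lam2 l u) z
        = (fun w => grad f z + w) @` ncone (Pi B l u z) z
    & forall x : 'rV[R]_n,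
        ((fun w => grad f x + w) @` ncone (Pi B l u z) x) 0 ->
        lsubdiff (Ffun f B lam1 lam2 l u) x 0].
Proof.
move=> hf h1 h2 _ _ z bz.
exact: (@mainB R n p B lam1 lam2 l u h1 h2 f hf z bz).
Qed.
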